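(* Let $(\breve N,\breve g,\breve P)$ be a Golden semi-Riemannian manifold. Then $\breve N$ admits no $1$-lightlike radical transversal lightlike submanifold. That is, there is no radical transversal lightlike submanifold $\acute N$ of $\breve N$ with $\operatorname{rank}(\mathrm{Rad}\,T\acute N)=1$.
   Context: A Golden semi-Riemannian manifold $(\breve N,\breve g,\breve P)$ is a semi-Riemannian manifold $(\breve N,\breve g)$ with a $(1,1)$-tensor field $\breve P$ such that $\breve P^2=\breve P+I$ and $\breve g(\breve PX,Y)=\breve g(X,\breve PY)$ for all vector fields $X,Y$. Equivalently, the second condition reads $\breve g(\breve PX,\breve PY)=\breve g(\breve PX,Y)+\breve g(X,Y)$. A lightlike submanifold $(\acute N,g,S(T\acute N),S(T\acute N^\perp))$ of $\breve N$ is an immersed submanifold whose induced metric $g$ is degenerate, with radical distribution $\mathrm{Rad}\,T\acute N=T\acute N\cap T\acute N^\perp$ of constant rank $r\ge1$. It comes with the following bundles: - a non-degenerate screen distribution $S(T\acute N)$, with $T\acute N=\mathrm{Rad}\,T\acute N\perp S(T\acute N)$; - a non-degenerate screen transversal bundle $S(T\acute N^\perp)$, which is a complement of $\mathrm{Rad}\,T\acute N$ in $T\acute N^\perp$; - a lightlike transversal bundle $ltr(T\acute N)$ of rank $r$. The bundle $ltr(T\acute N)$ is orthogonal to $S(T\acute N)$ and $S(T\acute N^\perp)$. For any local basis $\{\xi_i\}$ of $\mathrm{Rad}\,T\acute N$ it is locally spanned by $\{N_i\}$ with $\breve g(N_i,\xi_j)=\delta_{ij}$ and $\breve g(N_i,N_j)=0$.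 Thus $$T\breve N|_{\acute N}=S(T\acute N)\perp[\mathrm{Rad}\,T\acute N\oplus ltr(T\acute N)]\perp S(T\acute N^\perp).$$ Such a submanifold is called $r$-lightlike when $\operatorname{rank}\mathrm{Rad}\,T\acute N=r$. A lightlike submanifold is a radical transversal lightlike submanifold if $\breve P(\mathrm{Rad}\,T\acute N)=ltr(T\acute N)$ and $\breve P(S(T\acute N))=S(T\acute N)$. *)

(* Defs.v *)
(* Pointwise (tangent-space) linear-algebra model of a
   Golden semi-Riemannian manifold and of its lightlike submanifolds.
   Vectors of the ambient tangent space are row vectors 'rV[R]_n;
   subspaces are represented, as in mxalgebra, by the row spaces of
   matrices 'M_n. *)
From HB Require Import structures.
From mathcomp Require Import all_boot all_order all_algebra.
Set Implicit Arguments. Unset Strict Implicit. Unset Printing Implicit Defensive.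
Import Order.TTheory GRing.Theory Num.Theory.
Local Open Scope ring_scope.

Section GoldenDefs.
Variables (R : realFieldType) (n : nat).

Definition bform (G : 'M[R]_n) (u v : 'rV[R]_n) : R := (u *m G *m v^T) 0 0.

(* (G, P) : a semi-Riemannian metric (symmetric, non-degenerate, any signature)
   together with a Golden structure P (acting on row vectors by u |-> u *m P):
   P^2 = P + I and g(PX,Y) = g(X,PY). *)
Definition golden_semi_riemannian (G P : 'M[R]_n) : Prop :=
  [/\ G^T = G, G \in unitmx, P *m P = P + 1%:M & P *m G = G *m P^T].

Definition orthsp (G A B : 'M[R]_n) : Prop := A *m G *m B^T = 0.

Definition perpsp (G T : 'M[R]_n) : 'M[R]_n := kermx (T *m G)^T.

Definition radical (G T : 'M[R]_n) : 'M[R]_n := (T :&: perpsp G T)%MS.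

Definition nondeg (G S : 'M[R]_n) : Prop :=
  forall u : 'rV[R]_n, (u <= S)%MS ->
    (forall v : 'rV[R]_n, (v <= S)%MS -> bform G u v = 0) -> u = 0.

(* (T, S(T), S(T^⊥), ltr(T)) is an r-lightlike submanifold (tangent data):
   ST = screen distribution, STp = screen transversal bundle,
   L = lightlike transversal bundle. *)
Definition lightlike_data (G T : 'M[R]_n) (r : nat) (ST STp L : 'M[R]_n) : Prop :=
  [/\ \rank (radical G T) = r /\ (0 < r)%N,
      [/\ mxdirect (radical G T + ST), (radical G T + ST == T)%MS,
          orthsp G (radical G T) ST & nondeg G ST],
      [/\ (STp <= perpsp G T)%MS, mxdirect (radical G T + STp),
          (radical G T + STp == perpsp G T)%MS & nondeg G STp],
      [/\ \rank L = r, orthsp G L ST, orthsp G L STp &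
      (forall xi : 'M[R]_(r, n), row_free xi -> (xi == radical G T)%MS ->
         exists Nm : 'M[R]_(r, n),
           [/\ (Nm == L)%MS, Nm *m G *m xi^T = 1%:M & Nm *m G *m Nm^T = 0])]
    & ((ST + (radical G T + L) + STp == 1%:M)%MS /\
       mxdirect (ST + (radical G T + L) + STp))].

Definition radical_transversal_lightlike (G P T : 'M[R]_n) (r : nat) : Prop :=
  exists ST STp L : 'M[R]_n,
    [/\ lightlike_data G T r ST STp L,
        (radical G T *m P == L)%MS & (ST *m P == ST)%MS].

End GoldenDefs.

(* Main.v *)
Require Import Defs.
From HB Require Import structures.
From mathcomp Require Import all_boot all_order all_algebra.
Import Order.TTheory GRing.Theory Num.Theory.
Local Open Scope ring_scope.

Theorem mainTheorem1 (R : realFieldType) (n : nat) (G P : 'M[R]_n) :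
  golden_semi_riemannian G P ->
  forall T : 'M[R]_n, ~ radical_transversal_lightlike G P T 1.
Proof.
move=> [GT _ PP PG] T [ST [STp [L [[[rk _] _ _ [_ _ _ HN] _] RP _]]]].
set Rd := radical G T in rk HN RP.
have : exists xi : 'M[R]_(1, n), row_free xi /\ (xi == Rd)%MS.
  move: (row_base Rd) (row_base_free Rd) (eq_row_base Rd).
  rewrite rk => xi fr eq; exists xi; split => //; exact/eqmxP.
move=> [xi [fr xiRd]].
have [Nm [NL H1 H2]] := HN xi fr xiRd.
have xiP : (xi *m P == L)%MS.
  apply/eqmxP; apply: eqmx_trans (eqmxP RP).
  exact: eqmxMr (eqmxP xiRd).
have [a Ha] : exists a : 'M[R]_(1,1), Nm = a *m (xi *m P).
  by apply/submxP; rewrite (eqmxP NL) (eqmxP xiP) submx_refl.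
have x0 : xi *m G *m xi^T = 0.
  have xs : (xi <= Rd)%MS by rewrite (eqmxP xiRd) submx_refl.
  have xT : (xi <= T)%MS by apply: submx_trans xs _; exact: capmxSl.
  have xP : (xi <= perpsp G T)%MS by apply: submx_trans xs _; exact: capmxSr.
  move: xP; rewrite /perpsp sub_kermx trmx_mul GT => /eqP E.
  have [b Hb] := submxP xT.
  by rewrite {2}Hb trmx_mul !mulmxA -(mulmxA xi G) E mul0mx.
have PGP : P *m G *m P^T = G *m P^T + G.
  by rewrite PG -mulmxA -trmx_mul PP linearD /= trmx1 mulmxDr mulmx1.
have key : (xi *m P) *m G *m (xi *m P)^T = (xi *m P) *m G *m xi^T.
  rewrite trmx_mul !mulmxA -(mulmxA xi P G) -(mulmxA xi (P *m G) P^T).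
  rewrite PGP mulmxDr mulmxDl x0 addr0.
  by rewrite PG.
have aT : a^T = 0.
  rewrite -H2 Ha; move: key H1; rewrite Ha; move: (xi *m P) => M key H1.
  rewrite trmx_mul !mulmxA -(mulmxA a M G) -(mulmxA a (M *m G) M^T) key.
  by rewrite !mulmxA H1 mul1mx.
have a0 : a = 0 by rewrite -[a]trmxK aT trmx0.
move: H1; rewrite Ha a0 !mul0mx => /matrixP /(_ 0 0).
by rewrite !mxE eqxx /= => /eqP; rewrite eq_sym oner_eq0.
Qed.
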